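(* Let $p$ be the POP of length 4 defined by the single relation $1>4$ (labels $2,3$ isolated); equivalently, avoiding $p$ means avoiding all 12 patterns of length 4 whose first entry exceeds the last. Let $a(n)=|S_n(p)|$. Then $a(0)=a(1)=1$, $a(2)=2$, $a(3)=6$, and for $n\geq 4$, $$a(n)=a(n-1)+a(n-2)+3a(n-3)+a(n-4).$$ Moreover, $$\sum_{n\geq 0}a(n)x^n=\frac{1}{1-x-x^2-3x^3-x^4}.$$
   Context: An $n$-permutation is a word $\pi=\pi_1\cdots\pi_n$ containing each of $1,\ldots,n$ exactly once; $S_n$ is the set of $n$-permutations ($S_0$ consists of the empty permutation). A partially ordered pattern (POP) $p$ of length $k$ is a partial order on the label set $\{1,\ldots,k\}$; it is described by a set of generating relations, where a relation $x>y$ means that in an occurrence the entry in the $x$-th chosen position must be larger than the entry in the $y$-th chosen position, and labels not involved in any relation are unconstrained. An $n$-permutation $\pi$ contains $p$ if there are indices $1\leq i_1<\cdots<i_k\leq n$ such that $\pi_{i_x}>\pi_{i_y}$ whenever $x>y$ in the partial order; otherwise $\pi$ avoids $p$. $S_n(p)$ denotes the set of $n$-permutations avoiding $p$. *)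

(* Defs.v *)
From HB Require Import structures.
From mathcomp Require Import all_boot all_order all_algebra all_fingroup.
Set Implicit Arguments. Unset Strict Implicit. Unset Printing Implicit Defensive.
Import GRing.Theory.

(* A partially ordered pattern of length k, given by generating relations;
   labels are 0-indexed: label x of the paper is the ordinal x-1.
   A pair (x, y) in pop_rel means "x > y". *)
Record POP := { pop_len : nat; pop_rel : seq ('I_pop_len * 'I_pop_len) }.

Definition pop_contains (p : POP) (n : nat) (pi : 'S_n) : bool :=
  [exists idx : {ffun 'I_(pop_len p) -> 'I_n},
     [forall i : 'I_(pop_len p), forall j : 'I_(pop_len p),
        (i < j)%N ==> (idx i < idx j)%N]
     && all (fun r => (pi (idx r.2) < pi (idx r.1))%N) (pop_rel p)].

Definition pop_avoids (p : POP) (n : nat) (pi : 'S_n) : bool :=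
  ~~ pop_contains p pi.

Definition num_avoiders (p : POP) (n : nat) : nat :=
  #|[set pi : 'S_n | pop_avoids p pi]|.

Definition pop_1gt4 : POP :=
  {| pop_len := 4; pop_rel := [:: (inord 0 : 'I_4, inord 3 : 'I_4)] |}.

Definition den_1gt4 : {poly int} :=
  1 - 'X - 'X^2 - 3%:P * 'X^3 - 'X^4.

(* Main.v *)
Require Import Defs.
From HB Require Import structures.
From mathcomp Require Import all_boot all_order all_algebra all_fingroup.
From mathcomp Require Import zify.
Import GRing.Theory.
Set Implicit Arguments. Unset Strict Implicit. Unset Printing Implicit Defensive.

Definition good n (s : 'S_n) : bool :=
  [forall i : 'I_n, forall l : 'I_n, (i + 3 <= l)%N ==> (s i < s l)%N].

Lemma goodP n (s : 'S_n) :
  reflect (forall i l : 'I_n, (i + 3 <= l)%N -> (s i < s l)%N) (good s).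
Proof.
apply: (iffP forallP) => H.
  by move=> i l; move/forallP: (H i) => /(_ l) /implyP.
by move=> i; apply/forallP => l; apply/implyP; apply: H.
Qed.

Definition pv n (s : 'S_n) (i : nat) : nat :=
  nth n [seq val (s j) | j <- enum 'I_n] i.

Lemma pvE n (s : 'S_n) (j : 'I_n) : pv s j = s j.
Proof. by rewrite /pv (nth_map j) ?size_enum_ord // nth_ord_enum. Qed.

Definition prefix (bs : seq nat) n (s : 'S_n) : bool :=
  all (fun i => pv s i == nth 0 bs i) (iota 0 (size bs)).

Definition good_list (bs : seq nat) : bool :=
  all (fun i => all (fun l => (i + 3 <= l) ==> (nth 0 bs i < nth 0 bs l))
    (iota 0 (size bs))) (iota 0 (size bs)).

Lemma classify m (s : 'S_(m.+4)) : good s ->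
  pv s 0 = 0 \/ (pv s 0 = 1 /\ pv s 1 = 0) \/
  [/\ pv s 0 = 1, pv s 1 = 2 & pv s 2 = 0] \/
  [/\ pv s 0 = 2, pv s 1 = 0 & pv s 2 = 1] \/
  [/\ pv s 0 = 2, pv s 1 = 1 & pv s 2 = 0] \/
  [/\ pv s 0 = 1, pv s 1 = 3, pv s 2 = 0 & pv s 3 = 2].
Proof.
move/goodP => Hg.
have pvI i : (i < 4)%N -> pv s i = s (inord i).
  by move=> Hi; rewrite -{1}(@inordK m.+3 i) ?pvE //; lia.
pose q v := nat_of_ord ((s^-1)%g (inord v)).
have hq v i : (v < 4)%N -> (i < 4)%N -> q v = i -> pv s i = v.
  move=> Hv Hi Hq; rewrite pvI //.
  have -> : (inord i : 'I_m.+4) = (s^-1)%g (inord v).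
    by apply: ord_inj; rewrite inordK ?Hq //; lia.
  by rewrite permKV inordK //; lia.
have hL v i : (v < 4)%N -> (i < 4)%N -> (v < pv s i)%N -> (q v <= i + 2)%N.
  move=> Hv Hi; rewrite pvI // => Hlt; rewrite leqNgt; apply/negP => Hc.
  have := Hg (inord i) ((s^-1)%g (inord v)); rewrite inordK; last by lia.
  have Hc' : (i + 3 <= q v)%N by lia.
  move=> /(_ Hc'); rewrite permKV inordK; last by lia.
  by move: Hlt; move: (nat_of_ord (s (inord i))) => x; lia.
have hD i j : (i < 4)%N -> (j < 4)%N -> i != j -> pv s i != pv s j.
  move=> Hi Hj Hij; rewrite !pvI //; apply/negP => /eqP /ord_inj /perm_inj.
  by move/(congr1 val); rewrite /= !inordK //; apply/eqP; lia.
have hA : (pv s 0 <= 2)%N.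
  rewrite leqNgt; apply/negP => HA.
  have h0 : pv s 1 = 0 \/ pv s 2 = 0 by move: (hL 0 0 isT isT) (hq 0 0 isT isT) (hq 0 1 isT isT) (hq 0 2 isT isT); lia.
  have h1 : pv s 1 = 1 \/ pv s 2 = 1 by move: (hL 1 0 isT isT) (hq 1 0 isT isT) (hq 1 1 isT isT) (hq 1 2 isT isT); lia.
  have h2 : pv s 1 = 2 \/ pv s 2 = 2 by move: (hL 2 0 isT isT) (hq 2 0 isT isT) (hq 2 1 isT isT) (hq 2 2 isT isT); lia.
  lia.
have : pv s 0 = 0 \/ pv s 0 = 1 \/ pv s 0 = 2 by lia.
case=> [HA|[HA|HA]].
- by left.
- have : pv s 1 = 0 \/ pv s 2 = 0 by move: (hL 0 0 isT isT) (hq 0 0 isT isT) (hq 0 1 isT isT) (hq 0 2 isT isT); lia.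
  case=> [HB|HC]; first by right; left.
  have HB2 : (2 <= pv s 1)%N by move: (hD 0 1 isT isT isT) (hD 1 2 isT isT isT); lia.
  have : pv s 1 = 2 \/ pv s 1 = 3 \/ (4 <= pv s 1)%N by lia.
  case=> [HB|[HB|HB]].
  + by right; right; left.
  + have HD : pv s 3 = 2 by move: (hL 2 1 isT isT) (hq 2 0 isT isT) (hq 2 1 isT isT) (hq 2 2 isT isT) (hq 2 3 isT isT); lia.
    by right; right; right; right; right.
  + exfalso.
    have HD2 : pv s 3 = 2 by move: (hL 2 1 isT isT) (hq 2 0 isT isT) (hq 2 1 isT isT) (hq 2 2 isT isT) (hq 2 3 isT isT); lia.
    have HD3 : pv s 3 = 3 by move: (hL 3 1 isT isT) (hq 3 0 isT isT) (hq 3 1 isT isT) (hq 3 2 isT isT) (hq 3 3 isT isT); lia.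
    lia.
- have h0 : pv s 1 = 0 \/ pv s 2 = 0 by move: (hL 0 0 isT isT) (hq 0 0 isT isT) (hq 0 1 isT isT) (hq 0 2 isT isT); lia.
  have h1 : pv s 1 = 1 \/ pv s 2 = 1 by move: (hL 1 0 isT isT) (hq 1 0 isT isT) (hq 1 1 isT isT) (hq 1 2 isT isT); lia.
  case: h0 => h0; case: h1 => h1.
  + lia.
  + by right; right; right; left.
  + by right; right; right; right; left.
  + lia.
Qed.

Section Block.
Variable bs : seq nat.
Hypothesis Hall : all (fun x => x < size bs) bs.
Hypothesis Huniq : uniq bs.
Hypothesis Hgood : good_list bs.
Local Notation k := (size bs).

Lemma bs_lt (j : 'I_k) : nth 0 bs j < k.
Proof. exact: (allP Hall) _ (mem_nth 0 (ltn_ord j)). Qed.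

Definition bo (j : 'I_k) : 'I_k := Ordinal (bs_lt j).

Variable m : nat.

Definition extf (s : 'S_m) (i : 'I_(k + m)) : 'I_(k + m) :=
  match split i with inl j => lshift m (bo j) | inr j => rshift k (s j) end.

Lemma extf_inj s : injective (extf s).
Proof.
move=> i1 i2 /(congr1 val); rewrite /extf.
case: splitP => j1 e1; case: splitP => j2 e2 /= H; apply: val_inj; rewrite /= e1 e2.
- congr val; apply: val_inj => /=.
  by apply/eqP; rewrite -(nth_uniq 0 (ltn_ord j1) (ltn_ord j2) Huniq) H.
- by have := bs_lt j1; rewrite H ltnNge leq_addr.
- by have := bs_lt j2; rewrite -H ltnNge leq_addr.
- by congr (_ + val _); apply: (@perm_inj _ s); apply: val_inj => /=; lia.
Qed.

Definition ext (s : 'S_m) : 'S_(k + m) := perm (@extf_inj s).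

Lemma ext_rshift s (j : 'I_m) : ext s (rshift k j) = rshift k (s j).
Proof. by rewrite permE /extf -[rshift k j]/(unsplit (inr j)) unsplitK. Qed.

Lemma ext_inj : injective ext.
Proof.
move=> s1 s2 E; apply/permP => j.
have := ext_rshift s1 j; rewrite E ext_rshift => /(congr1 val) /= H.
by apply: val_inj; apply/eqP; rewrite -(eqn_add2l k) H.
Qed.

Lemma ext_lshift s (j : 'I_k) : val (ext s (lshift m j)) = nth 0 bs j.
Proof. by rewrite permE /extf -[lshift m j]/(unsplit (inl j)) unsplitK. Qed.

Lemma good_listP i l : (i + 3 <= l)%N -> l < k -> nth 0 bs i < nth 0 bs l.
Proof.
move=> Hil Hl.
have Hi : i \in iota 0 k by rewrite mem_iota; lia.
have Hl' : l \in iota 0 k by rewrite mem_iota; lia.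
by move/allP: Hgood => /(_ i Hi) /allP /(_ l Hl') /implyP; apply.
Qed.

Lemma ext_good s : good s -> good (ext s).
Proof.
move/goodP=> H; apply/goodP => i l.
case: (splitP i) => j1 e1; case: (splitP l) => j2 e2.
- have -> : i = lshift m j1 by apply: val_inj.
  have -> : l = lshift m j2 by apply: val_inj.
  rewrite !ext_lshift /= => Hil; apply: good_listP => //; lia.
- have -> : i = lshift m j1 by apply: val_inj.
  have -> : l = rshift k j2 by apply: val_inj.
  rewrite ext_lshift ext_rshift /= => _.
  by apply: leq_trans (bs_lt j1) (leq_addr _ _).
- have := ltn_ord j2; lia.
- have -> : i = rshift k j1 by apply: val_inj.
  have -> : l = rshift k j2 by apply: val_inj.
  rewrite !ext_rshift /= => Hil; rewrite ltn_add2l; apply: H; lia.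
Qed.

Lemma prefix_ext s : prefix bs (ext s).
Proof.
apply/allP => i; rewrite mem_iota add0n => /andP [_ Hi].
have Hi' : (i < k + m)%N by lia.
rewrite -[i]/(val (Ordinal Hi')) pvE.
have -> : Ordinal Hi' = lshift m (Ordinal Hi) by apply: val_inj.
by rewrite ext_lshift.
Qed.

Lemma ext_surj (p : 'S_(k + m)) : good p -> prefix bs p ->
  exists2 s, good s & p = ext s.
Proof.
move=> /goodP Hg /allP Hp.
have Hpre (j : 'I_k) : val (p (lshift m j)) = nth 0 bs j.
  have := Hp j; rewrite mem_iota add0n ltn_ord => /(_ isT) /eqP <-.
  by rewrite -[val j]/(val (lshift m j)) pvE.
have Hge (j : 'I_m) : (k <= p (rshift k j))%N.
  rewrite leqNgt; apply/negP => Hlt.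
  have Hsubs : {subset bs <= iota 0 k}.
    by move=> x Hx; rewrite mem_iota add0n; exact: (allP Hall) x Hx.
  have Hsz : (size (iota 0 k) <= k)%N by rewrite size_iota.
  have [_ Eq] := uniq_min_size Huniq Hsubs Hsz.
  have : val (p (rshift k j)) \in bs by rewrite Eq mem_iota.
  move=> Hin; have Hidx : (index (val (p (rshift k j))) bs < k)%N by rewrite index_mem.
  have := Hpre (Ordinal Hidx); rewrite /= nth_index // => /val_inj /perm_inj.
  move/(congr1 val) => /= E; move: Hidx; by rewrite E ltnNge leq_addr.
have Hsub (j : 'I_m) : (p (rshift k j) - k < m)%N.
  have := ltn_ord (p (rshift k j)); have := Hge j; lia.
pose sf (j : 'I_m) : 'I_m := Ordinal (Hsub j).
have sf_inj : injective sf.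
  move=> j1 j2 /(congr1 val) /= E.
  have E' : p (rshift k j1) = p (rshift k j2).
    apply: ord_inj; have := Hge j1; have := Hge j2; move: E.
    move: (nat_of_ord (p (rshift k j1))) (val (p (rshift k j2))) => x y; lia.
  by move/perm_inj/(congr1 val): E' => /= /eqP; rewrite eqn_add2l => /eqP/val_inj.
exists (perm sf_inj).
  apply/goodP => j1 j2 Hj; rewrite !permE /=.
  have : (rshift k j1 + 3 <= rshift k j2)%N by rewrite /=; lia.
  move/Hg; have := Hge j1; have := Hge j2.
  move: (nat_of_ord (p (rshift k j1))) (val (p (rshift k j2))) => x y; lia.
apply/permP => i; apply: ord_inj.
case: (splitP i) => j e.
- have -> : i = lshift m j by apply: ord_inj.
  by rewrite ext_lshift Hpre.
- have -> : i = rshift k j by apply: ord_inj.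
  rewrite ext_rshift /= permE /=; have := Hge j.
  move: (nat_of_ord (p (rshift k j))) => x; lia.
Qed.

Lemma card_block :
  #|[set p : 'S_(k + m) | good p && prefix bs p]| = #|[set s : 'S_m | good s]|.
Proof.
rewrite -(card_imset _ ext_inj); apply: eq_card => p; rewrite !inE.
apply/idP/imsetP.
- by case/andP => Hg Hp; have [s Hs ->] := ext_surj Hg Hp; exists s; rewrite ?inE.
- by case=> s; rewrite inE => Hs ->; rewrite ext_good // prefix_ext.
Qed.

End Block.

Lemma avoidsE n (s : 'S_n) : pop_avoids pop_1gt4 s = good s.
Proof.
rewrite /pop_avoids /pop_contains /=.
apply/idP/idP.
- move=> Hn; apply/goodP => i l Hil.
  rewrite ltnNge; apply/negP => Hle.
  have Hne : s i != s l.
    apply/negP => /eqP /perm_inj E; move: Hil; rewrite E; lia.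
  have Hlt : (s l < s i)%N by rewrite ltn_neqAle eq_sym Hne Hle.
  have h1 : (i.+1 < n)%N by have := ltn_ord l; lia.
  have h2 : (i.+2 < n)%N by have := ltn_ord l; lia.
  set idx := [ffun x : 'I_4 => nth l [:: i; Ordinal h1; Ordinal h2; l] x].
  move/negP: Hn; apply; apply/existsP; exists idx; apply/andP; split.
    apply/forallP => x; apply/forallP => y; apply/implyP => Hxy.
    rewrite !ffunE.
    case: x Hxy => [[|[|[|[|x]]]] Hx] //=; case: y => [[|[|[|[|y]]]] Hy] //= _; lia.
  by rewrite /= !ffunE !inordK //= andbT.
- move/goodP => H; apply/negP => /existsP [idx /and3P [/forallP Hm Hr _]].
  have M x y : (x < y < 4)%N -> (idx (inord x) < idx (inord y))%N.
    move=> /andP [Hxy Hy]; have := Hm (inord x); move/forallP/(_ (inord y))/implyP; apply.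
    by rewrite !inordK //; lia.
  have := M 0 1 isT; have := M 1 2 isT; have := M 2 3 isT => a b c.
  move: Hr; rewrite ltnNge => /negP; apply; apply: ltnW; apply: H; rewrite addn3; apply: leq_trans _ a; rewrite ltnS; apply: leq_trans _ b; exact: c.
Qed.

Lemma aE n : num_avoiders pop_1gt4 n = #|[set s : 'S_n | good s]|.
Proof. by apply: eq_card => s; rewrite !inE avoidsE. Qed.

Lemma small n : (n < 4)%N -> num_avoiders pop_1gt4 n = n`!.
Proof.
move=> Hn; rewrite aE -card_Sn; apply: eq_card => s; rewrite !inE.
by apply/goodP => i l Hil; have := ltn_ord l; have := ltn_ord i; lia.
Qed.

Lemma count_block bs n : all (fun x => x < size bs) bs -> uniq bs -> good_list bs ->
  (size bs <= n)%N ->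
  #|[set p : 'S_n | good p && prefix bs p]| = num_avoiders pop_1gt4 (n - size bs).
Proof.
move=> H1 H2 H3 Hn; rewrite aE.
by have := card_block H1 H2 H3 (n - size bs); rewrite subnKC.
Qed.

Lemma sum_prefix n bs :
  \sum_(s in [set s : 'S_n | good s]) (prefix bs s : nat) =
  #|[set s : 'S_n | good s && prefix bs s]|.
Proof.
rewrite -sum1_card big_mkcond [RHS]big_mkcond; apply: eq_bigr => s _.
by rewrite !inE; case: (good s); case: (prefix bs s).
Qed.

Definition blocks : seq (seq nat) :=
  [:: [:: 0]; [:: 1; 0]; [:: 1; 2; 0]; [:: 2; 0; 1]; [:: 2; 1; 0]; [:: 1; 3; 0; 2]].

Lemma recur m : num_avoiders pop_1gt4 m.+4 =
  (num_avoiders pop_1gt4 m.+3 + num_avoiders pop_1gt4 m.+2 +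
   3 * num_avoiders pop_1gt4 m.+1 + num_avoiders pop_1gt4 m)%N.
Proof.
rewrite aE -sum1_card.
rewrite (eq_bigr (fun s => \sum_(b <- blocks) (prefix b s : nat))); last first.
  move=> s; rewrite inE => /classify.
  rewrite /blocks !big_cons big_nil /prefix /=.
  case=> [H|[[H1 H2]|[[H1 H2 H3]|[[H1 H2 H3]|[[H1 H2 H3]|[H1 H2 H3 H4]]]]]];
    by rewrite ?H ?H1 ?H2 ?H3 ?H4.
rewrite exchange_big /blocks !big_cons big_nil !sum_prefix.
rewrite !count_block //= !subSS !subn0.
move: (num_avoiders pop_1gt4 m.+3) (num_avoiders pop_1gt4 m.+2) (num_avoiders pop_1gt4 m.+1) (num_avoiders pop_1gt4 m) => x y z w; lia.
Qed.

Local Open Scope ring_scope.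
Lemma denE k : den_1gt4`_k = nth 0 [:: 1; -1; -1; -3; -1] k.
Proof.
rewrite /den_1gt4 !coefB coef1 coefX !coefXn coefCM coefXn.
case: k => [|[|[|[|[|k]]]]] //=. all: try lia. by rewrite nth_nil; lia.
Qed.

Ltac peel := rewrite big_ltn; [|exact isT].

Lemma gf (f : nat -> nat) : f 0%N = 1%N -> f 1%N = 1%N -> f 2%N = 2%N -> f 3%N = 6%N ->
  (forall m, f m.+4 = (f m.+3 + f m.+2 + 3 * f m.+1 + f m)%N) ->
  forall n, \sum_(k < n.+1) den_1gt4`_k * (f (n - k)%N)%:Z = (n == 0%N)%:R.
Proof.
move=> f0 f1 f2 f3 fr n.
rewrite -(big_mkord xpredT (fun k => den_1gt4`_k * (f (n - k)%N)%:Z)).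
under eq_bigr => k _ do rewrite denE.
case: n => [|[|[|[|m]]]].
- peel; rewrite big_geq; [|exact isT].
  rewrite /= ?subSS ?subn0 ?sub0n f0; lia.
- do 2 peel; rewrite big_geq; [|exact isT].
  rewrite /= ?subSS ?subn0 ?sub0n f0 f1; lia.
- do 3 peel; rewrite big_geq; [|exact isT].
  rewrite /= ?subSS ?subn0 ?sub0n f0 f1 f2; lia.
- do 4 peel; rewrite big_geq; [|exact isT].
  rewrite /= ?subSS ?subn0 ?sub0n f0 f1 f2 f3; lia.
- do 5 peel.
  rewrite big1_seq; last first.
    move=> i /andP [_]; rewrite mem_iota => /andP [Hi _].
    by rewrite nth_default ?mul0r.
  rewrite /= ?subSS ?subn0 ?sub0n fr.
  move: (f m.+3) (f m.+2) (f m.+1) (f m) => x y z w; lia.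
Qed.


Theorem theorem3p4 :
  let a := num_avoiders pop_1gt4 in
  [/\ [/\ a 0%N = 1%N, a 1%N = 1%N, a 2%N = 2%N & a 3%N = 6%N],
      (forall n : nat, (4 <= n)%N ->
         a n = (a n.-1 + a n.-2 + 3 * a (n - 3) + a (n - 4))%N)
    & (forall n : nat,
         \sum_(k < n.+1) den_1gt4`_k * (a (n - k)%N)%:Z = (n == 0%N)%:R)].
Proof.
move=> a; rewrite /a; split.
- by split; rewrite small; [|exact isT| |exact isT| |exact isT| |exact isT].
- move=> n Hn; have [m ->] : exists m, n = m.+4 by exists (n - 4)%N; lia.
  rewrite recur -[m.+4.-1]/(m.+3) -[m.+4.-2]/(m.+2) !subSS !subn0.
  move: (num_avoiders pop_1gt4 m.+3) (num_avoiders pop_1gt4 m.+2)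
        (num_avoiders pop_1gt4 m.+1) (num_avoiders pop_1gt4 m) => x y z w; lia.
- apply: gf; [| | | |exact: recur]; rewrite small; [|exact isT| |exact isT| |exact isT| |exact isT];
    by [].
Qed.
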